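(* Let $G$ be a graph whose edges are coloured with colours $1$ and $2$, and let $A_1,A_2,B$ be pairwise disjoint subsets of $V(G)$. For $i=1,2$, suppose every vertex of $A_i$ is adjacent to every vertex of $B$ and all these edges between $A_i$ and $B$ have colour $i$; let $P_{A_i}$ be a non-empty path of colour $i$ in $G[A_i]$, and let $P_B^i$ be a (possibly empty) path of colour $i$ in $G[B]$. Suppose that (a) the vertex sets of $P_B^1$ and $P_B^2$ partition $B$, and (b) $|A_1\setminus V(P_{A_1})|+|A_2\setminus V(P_{A_2})|+2\le |B|$. Then $A_1\cup A_2\cup B$ can be partitioned into two monochromatic cycles, one of colour $1$ and one of colour $2$.
   Context: A path or cycle is of colour $i$ (monochromatic) if all its edges have colour $i$; a single vertex is a path of any colour, and a single vertex, a single edge, and the empty set are also considered to be cycles. *)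

(* Defs.v *)
From mathcomp Require Import all_boot.
Set Implicit Arguments. Unset Strict Implicit. Unset Printing Implicit Defensive.

(* A 2-edge-coloured simple graph on a finite vertex type T is given by the
   two relations e1 (edges of colour 1) and e2 (edges of colour 2); the edge
   set of G is e1 ∪ e2. *)
Definition simple_rel (T : finType) (e : rel T) : Prop :=
  symmetric e /\ irreflexive e.

Definition two_coloured_graph (T : finType) (e1 e2 : rel T) : Prop :=
  simple_rel e1 /\ simple_rel e2 /\ (forall x y, ~~ (e1 x y && e2 x y)).

(* A path (given by its sequence of vertices, possibly empty) all of whose
   edges lie in e.  A single vertex is a path of any colour. *)
Definition colour_path (T : finType) (e : rel T) (p : seq T) : bool :=
  uniq p && (if p is x :: q then path e x q else true).

(* A cycle whose edges all lie in e; the empty set, a single vertex and a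
   single edge are also considered cycles.  For size >= 3, [cycle e c] says
   consecutive vertices (cyclically) are e-adjacent; for size 2 it says the
   two vertices are e-adjacent (e symmetric). *)
Definition colour_cycle (T : finType) (e : rel T) (c : seq T) : bool :=
  uniq c && ((size c <= 1) || cycle e c).

(* Main.v *)
Require Import Defs.
From mathcomp Require Import all_boot zify.
Set Implicit Arguments. Unset Strict Implicit. Unset Printing Implicit Defensive.

Section H.
Variable T : finType.
Implicit Types (e : rel T) (s : seq T).

Lemma cp_small e s : size s <= 1 -> colour_path e s.
Proof. by case: s => [|x [|y s]]. Qed.

Lemma cp_take e s n : colour_path e s -> colour_path e (take n s).
Proof.
case: s => [|x s] //= /andP[/andP[Hx Hu] Hp]; case: n => [|n] //=.
rewrite /colour_path /= (take_uniq _ Hu) take_path // !andbT.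
by apply: contra Hx; apply: mem_take.
Qed.

Lemma cp_behead e s : colour_path e s -> colour_path e (behead s).
Proof.
case: s => [|x [|y s]] // /andP[/andP[Hx Hu] /andP[_ Hp]].
by apply/andP; split.
Qed.

Lemma cp_drop e s n : colour_path e s -> colour_path e (drop n s).
Proof.
elim: s n => [|x s IH] [|n] //= H; apply: IH; exact: (cp_behead H).
Qed.

Fixpoint weave (L R : seq T) : seq T :=
  match L, R with a :: L', b :: R' => a :: b :: weave L' R' | _, _ => [::] end.

Lemma count_weave (a : pred T) L R : size L = size R ->
  count a (weave L R) = count a L + count a R.
Proof.
elim: L R => [|x L IH] [|y R] //= [/IH ->]; lia.
Qed.

Variables (e : rel T) (isA isB : pred T).
Hypothesis Hsym : symmetric e.
Hypothesis Hab : forall a b, isA a -> isB b -> e a b.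

Lemma weave_path L R x h : size L = size R -> all isA L -> all isB R ->
  isB x -> isA h -> path e x (rcons (weave L R) h).
Proof.
elim: L R x => [|a L IH] [|b R] //= x.
  by move=> _ _ _ Hx Hh; rewrite Hsym Hab.
case=> Hs /andP[Ha HL] /andP[Hb HR] Hx Hh.
by rewrite Hsym Hab // Hab // IH.
Qed.

Lemma weave_cycle P S L R : P != [::] -> S != [::] ->
  colour_path e P -> colour_path e S -> all isA P -> all isB S ->
  size L = size R -> all isA L -> all isB R ->
  cycle e (P ++ S ++ weave L R).
Proof.
case: P => [|x0 P] // _; case: S => [|s0 S] // _.
move=> /andP[_ HP] /andP[_ HS] HAP HBS Hs HL HR.
rewrite /= rcons_cat cat_path HP /= rcons_cat cat_path HS /=.
have HxA : isA (last x0 P) by move/allP: HAP; apply; apply: mem_last.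
have HsB : isB (last s0 S) by move/allP: HBS; apply; apply: mem_last.
rewrite Hab //=; last by move/allP: HBS; apply; rewrite inE eqxx.
apply: (weave_path Hs HL HR HsB).
by move/allP: HAP; apply; rewrite inE eqxx.
Qed.

Lemma uniq_catI s t : uniq s -> uniq t ->
  (forall x, x \in s -> x \in t -> False) -> uniq (s ++ t).
Proof.
move=> us ut H; rewrite cat_uniq us ut andbT; apply/hasPn => x Ht.
by apply/negP => Hs; exact: H x Hs Ht.
Qed.
End H.
Lemma arith n1 n2 k1 k2 : k1 + k2 + 2 <= n1 + n2 ->
  exists p q, [/\ 1 <= p, p <= maxn n1 1, 1 <= q, q <= maxn n2 1 & p + q + k1 + k2 = n1 + n2].
Proof.
move=> H.
case: (leqP (n1 + n2 - k1 - k2) n1) => h.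
  exists (n1 + n2 - k1 - k2).-1, 1; split; lia.
exists (maxn n1 1), (n1 + n2 - k1 - k2 - maxn n1 1); split; lia.
Qed.

Ltac nlia := repeat match goal with
  | H : is_true ?b |- _ => lazymatch b with
      | leq _ _ => fail | _ => clear H end
  end; lia.

Theorem lemma3p4 (T : finType) (e1 e2 : rel T)
  (A1 A2 B : {set T}) (PA1 PA2 PB1 PB2 : seq T) :
  two_coloured_graph e1 e2 ->
  [disjoint A1 & A2] -> [disjoint A1 & B] -> [disjoint A2 & B] ->
  (forall a b, a \in A1 -> b \in B -> e1 a b) ->
  (forall a b, a \in A2 -> b \in B -> e2 a b) ->
  PA1 != [::] -> colour_path e1 PA1 -> {subset PA1 <= A1} ->
  PA2 != [::] -> colour_path e2 PA2 -> {subset PA2 <= A2} ->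
  colour_path e1 PB1 -> {subset PB1 <= B} ->
  colour_path e2 PB2 -> {subset PB2 <= B} ->
  (* (a) *)
  [disjoint PB1 & PB2] -> (forall x, x \in B -> (x \in PB1) || (x \in PB2)) ->
  (* (b) *)
  #|A1 :\: [set x in PA1]| + #|A2 :\: [set x in PA2]| + 2 <= #|B| ->
  exists C1 C2 : seq T,
    [/\ colour_cycle e1 C1, colour_cycle e2 C2, [disjoint C1 & C2] &
        forall x, (x \in A1 :|: A2 :|: B) = (x \in C1) || (x \in C2)].
Proof.
move=> [[sy1 _] [[sy2 _] _]] dA12 dA1B dA2B HA1 HA2 nP1 cP1 sP1 nP2 cP2 sP2
  cB1 sB1 cB2 sB2 dB cov Hcard.
set D1 := A1 :\: [set x in PA1]; set D2 := A2 :\: [set x in PA2].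
set L1 := enum D1; set L2 := enum D2.
set k1 := #|D1|; set k2 := #|D2|.
have sL1 : size L1 = k1 by rewrite /k1 cardE.
have sL2 : size L2 = k2 by rewrite /k2 cardE.
set W := PB1 ++ PB2.
have uW : uniq W.
  rewrite cat_uniq; case/andP: cB1 => -> _; case/andP: cB2 => -> _.
  by rewrite disjoint_sym disjoint_has in dB; rewrite dB.
have memW : forall x, (x \in W) = (x \in B).
  move=> x; rewrite mem_cat; apply/idP/idP; last exact: cov.
  by case/orP => [/sB1|/sB2].
have sW : size W = #|B|.
  by rewrite -(card_uniqP uW); apply: eq_card => x; rewrite memW.
have Hc : k1 + k2 + 2 <= size W by rewrite sW.
clear Hcard.
have sW' : size W = size PB1 + size PB2 by rewrite size_cat.
have [p [q [Hp1 Hp2 Hq1 Hq2 Hpq]]] := arith (leq_trans Hc (eq_leq sW')).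
have memL1 : forall x, (x \in L1) = (x \notin PA1) && (x \in A1).
  by move=> x; rewrite mem_enum in_setD inE.
have memL2 : forall x, (x \in L2) = (x \notin PA2) && (x \in A2).
  by move=> x; rewrite mem_enum in_setD inE.
have uL1 : uniq L1 by apply: enum_uniq.
have uL2 : uniq L2 by apply: enum_uniq.
clearbody L1 L2 k1 k2.
rewrite -sW' in Hpq; clear Hc sW.
set T0 := take (size W - q) W.
set S2 := drop (size W - q) W.
set S1 := take p T0.
set M := drop p T0.
set R1 := take k1 M.
set R2 := drop k1 M.
have sT0 : size T0 = size W - q by rewrite size_takel //; nlia.
have sM : size M = k1 + k2 by rewrite size_drop sT0; nlia.
have sR1 : size R1 = k1 by rewrite size_takel // sM; nlia.
have sR2 : size R2 = k2 by rewrite size_drop sM; nlia.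
have sS1 : size S1 = p by rewrite size_takel // sT0; nlia.
have sS2 : size S2 = q by rewrite size_drop; nlia.
have eW : W = (S1 ++ (R1 ++ R2)) ++ S2.
  by rewrite /R1 /R2 cat_take_drop /S1 /M cat_take_drop /T0 /S2 cat_take_drop.
have inW : forall x, x \in S1 ++ (R1 ++ R2) ++ S2 -> x \in B.
  by move=> x Hx; rewrite -memW eW -catA.
have cS1 : colour_path e1 S1.
  have -> : S1 = take p W by rewrite /S1 /T0 take_takel //; nlia.
  case: (leqP p (size PB1)) => h.
    by rewrite takel_cat //; apply: cp_take.
  by apply: cp_small; rewrite size_take_min; nlia.
have cS2 : colour_path e2 S2.
  case: (leqP q (size PB2)) => h.
    rewrite /S2 drop_cat ifN; last by rewrite -leqNgt; nlia.
    exact: cp_drop.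
  by apply: cp_small; rewrite sS2; nlia.
clearbody W.
set C1 := PA1 ++ S1 ++ weave L1 R1.
set C2 := PA2 ++ S2 ++ weave L2 R2.
set Big := PA1 ++ L1 ++ PA2 ++ L2 ++ W.
have hperm : perm_eq (C1 ++ C2) Big.
  apply/permP => a; rewrite /C1 /C2 /Big [W]eW !count_cat !count_weave ?sL1 ?sL2 //.
  move: (count a PA1) (count a PA2) (count a S1) (count a S2) (count a L1) (count a L2) (count a R1) (count a R2) => *; nlia.
have F12 : forall x, x \in A1 -> x \in A2 -> False.
  by move=> x h1; rewrite (disjointFr dA12 h1).
have F1B : forall x, x \in A1 -> x \in B -> False.
  by move=> x h1; rewrite (disjointFr dA1B h1).
have F2B : forall x, x \in A2 -> x \in B -> False.
  by move=> x h1; rewrite (disjointFr dA2B h1).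
have uBig : uniq Big.
  case/andP: cP1 => uP1 _; case/andP: cP2 => uP2 _.
  apply: uniq_catI => // [|x hx].
    apply: uniq_catI => // [|x hx].
      apply: uniq_catI => // [|x hx].
        apply: uniq_catI => // x; rewrite memW memL2 => /andP[_ h2].
        exact: F2B h2.
      have h2 := sP2 _ hx; rewrite mem_cat memW memL2 => /orP[/andP[h _]|].
        by rewrite hx in h.
      exact: F2B h2.
    move: hx; rewrite memL1 => /andP[_ h1].
    rewrite !mem_cat memW memL2 => /or3P[/sP2|/andP[_]|]; [exact: F12 h1|exact: F12 h1|exact: F1B h1].
  have h1 := sP1 _ hx.
  rewrite !mem_cat memW memL1 memL2 => /or4P[/andP[h _]|/sP2|/andP[_]|].
  - by rewrite hx in h.
  - exact: F12 h1.
  - exact: F12 h1.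
  - exact: F1B h1.
have uC : uniq (C1 ++ C2) by rewrite (perm_uniq hperm).
move: (uC); rewrite cat_uniq => /and3P[uC1 nh uC2].
have allW : forall s, {subset s <= W} -> all (fun x => x \in B) s.
  by move=> s Hs; apply/allP => x /Hs; rewrite memW.
have sub1 : {subset S1 <= W} by move=> x h; rewrite eW !mem_cat h.
have sub2 : {subset S2 <= W} by move=> x h; rewrite eW !mem_cat h !orbT.
have subR1 : {subset R1 <= W} by move=> x h; rewrite eW !mem_cat h !orbT.
have subR2 : {subset R2 <= W} by move=> x h; rewrite eW !mem_cat h !orbT.
exists C1, C2; split.
- rewrite /colour_cycle uC1 (weave_cycle sy1 HA1) ?orbT //.
  + by rewrite -size_eq0 sS1 -lt0n.
  + by apply/allP => x /sP1.
  + exact: allW.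
  + by rewrite sL1 sR1.
  + by apply/allP => x; rewrite memL1 => /andP[].
  + exact: allW.
- rewrite /colour_cycle uC2 (weave_cycle sy2 HA2) ?orbT //.
  + by rewrite -size_eq0 sS2 -lt0n.
  + by apply/allP => x /sP2.
  + exact: allW.
  + by rewrite sL2 sR2.
  + by apply/allP => x; rewrite memL2 => /andP[].
  + exact: allW.
- by rewrite disjoint_sym disjoint_has.
- move=> x; rewrite -mem_cat (perm_mem hperm) /Big !mem_cat memW memL1 memL2.
  rewrite !in_setU.
  case: (boolP (x \in PA1)) => h1; first by rewrite (sP1 _ h1).
  case: (boolP (x \in PA2)) => h2; first by rewrite (sP2 _ h2) /= orbT.
  by rewrite /=; case: (x \in A1); case: (x \in A2); case: (x \in B).
Qed.
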